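(* Let $(\Gamma,\psi)$ be an $H$-asymptotic couple with asymptotic integration. Suppose $\alpha\in(\Gamma^{<})'$ and $n\ge1$. Then $\alpha+(n+1)(s(\alpha)-\alpha)\in(\Gamma^{>})'$.
   Context: An asymptotic couple is a pair $(\Gamma,\psi)$ with $\Gamma$ an ordered abelian group and $\psi:\Gamma\setminus\{0\}\to\Gamma$ such that for all nonzero $\alpha,\beta$: $\alpha+\beta\ne0\Rightarrow\psi(\alpha+\beta)\ge\min(\psi(\alpha),\psi(\beta))$; $\psi(k\alpha)=\psi(\alpha)$ for $k\in\mathbb{Z}\setminus\{0\}$; $\alpha>0\Rightarrow\alpha+\psi(\alpha)>\psi(\beta)$. $H$-asymptotic: $0<\alpha\le\beta\Rightarrow\psi(\alpha)\ge\psi(\beta)$. Write $\gamma'=\gamma+\psi(\gamma)$ for $\gamma\ne0$, $(\Gamma^{>})'=\{\gamma':\gamma>0\}$, $(\Gamma^{<})'=\{\gamma':\gamma<0\}$. Asymptotic integration: every $\alpha\in\Gamma$ equals $\gamma'$ for a (necessarily unique) $\gamma\ne0$, denoted $\int\alpha$. The successor function is $s(\alpha)=\psi(\int\alpha)$. *)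

(* Defs.v *)
From HB Require Import structures.
From mathcomp Require Import all_boot all_order all_algebra.
From Stdlib Require Import ClassicalEpsilon.
Set Implicit Arguments. Unset Strict Implicit. Unset Printing Implicit Defensive.
Import GRing.Theory.
Local Open Scope ring_scope.

Definition ordered_abelian_group (G : zmodType) (le : rel G) : Prop :=
  [/\ reflexive le, antisymmetric le, transitive le, total le
    & forall x y z : G, le x y -> le (x + z) (y + z)].

Definition ltg (G : zmodType) (le : rel G) (x y : G) : bool := le x y && (x != y).

(* psi is only meaningful on G \ {0}; its value at 0 is irrelevant. *)
Definition asymptotic_couple (G : zmodType) (le : rel G) (psi : G -> G) : Prop :=
  [/\ forall a b : G, a != 0 -> b != 0 -> a + b != 0 ->
        le (psi a) (psi (a + b)) || le (psi b) (psi (a + b)),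
      forall (a : G) (k : int), a != 0 -> k != 0 -> psi (a *~ k) = psi a
    & forall a b : G, a != 0 -> b != 0 -> ltg le 0 a -> ltg le (psi b) (a + psi a)].

Definition H_asymptotic (G : zmodType) (le : rel G) (psi : G -> G) : Prop :=
  forall a b : G, a != 0 -> b != 0 -> ltg le 0 a -> le a b -> le (psi b) (psi a).

Definition dprime (G : zmodType) (psi : G -> G) (g : G) : G := g + psi g.

Definition in_pos_prime (G : zmodType) (le : rel G) (psi : G -> G) (a : G) : Prop :=
  exists g : G, ltg le 0 g /\ dprime psi g = a.
Definition in_neg_prime (G : zmodType) (le : rel G) (psi : G -> G) (a : G) : Prop :=
  exists g : G, ltg le g 0 /\ dprime psi g = a.

Definition has_asymptotic_integration (G : zmodType) (psi : G -> G) : Prop :=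
  forall a : G, exists g : G, g != 0 /\ dprime psi g = a.

Definition aint (G : zmodType) (psi : G -> G) (a : G) : G :=
  epsilon (inhabits (0 : G)) (fun g : G => g != 0 /\ dprime psi g = a).

Definition succ_fun (G : zmodType) (psi : G -> G) (a : G) : G := psi (aint psi a).

(* Main.v *)
Require Import Defs.
From mathcomp Require Import all_boot all_order all_algebra.
From Stdlib Require Import ClassicalEpsilon.
Import GRing.Theory.
Local Open Scope ring_scope.
Set Implicit Arguments. Unset Strict Implicit.

Lemma aux_eq (G : zmodType) (a b pa pb : G) : a + pa = b + pb -> pb = pa + (a - b).
Proof. move=> e; by rewrite -[pb](addKr b) -e addrC [a + _]addrC addrA. Qed.

Lemma aux2 (G : zmodType) (g p : G) n : (-g)*+n + p = g + p + (p - (g + p)) *+ n.+1.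
Proof.
by rewrite opprD addrA addrAC subrr add0r mulrS addrA [g + p - g]addrAC subrr add0r addrC.
Qed.

Section H.
Variables (G : zmodType) (le : rel G) (psi : G -> G).
Hypothesis hG : ordered_abelian_group le.
Hypothesis hAC : asymptotic_couple le psi.

Lemma leD x y z : le x y -> le (x + z) (y + z).
Proof. by case: hG => _ _ _ _ h; apply: h. Qed.

Lemma leDl x y z : le x y -> le (z + x) (z + y).
Proof. by rewrite ![z + _]addrC; apply: leD. Qed.

Lemma ltg_le_false x y : ltg le x y -> le y x -> False.
Proof.
case: hG => _ anti _ _ _ /andP [h1 h2] h3.
by move: h2; rewrite (anti x y) ?h1 ?h3 ?eqxx.
Qed.

Lemma le_trans' x y z : le x y -> le y z -> le x z.
Proof. by case: hG => _ _ tr _ _; apply: tr. Qed.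

Lemma inj_half a b : a != 0 -> b != 0 -> ltg le 0 (a - b) ->
  dprime psi a = dprime psi b -> False.
Proof.
move=> a0 b0 hd e.
set d := a - b in hd.
have d0 : d != 0 by case/andP: hd => _; rewrite eq_sym.
have hb : psi b = psi a + d.
  by apply: aux_eq.
have bd : b + d = a by rewrite /d addrCA subrr addr0.
case: hAC => h1 _ h3.
have := h1 b d b0 d0; rewrite bd => /(_ a0) /orP [hba|hda].
- case/andP: hd => h0 hne.
  have : le (psi a) (psi a + d) by have := leDl (psi a) h0; rewrite addr0.
  rewrite -hb => hab.
  case: hG => _ anti _ _ _.
  have eab : psi a = psi b by apply: anti; rewrite hab hba.
  have dz : d = 0 by apply: (addrI (psi a)); rewrite addr0 -hb eab.
  by move: hne; rewrite dz eqxx.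
- have := h3 d b d0 b0 hd => hlt.
  apply: (ltg_le_false hlt).
  by rewrite hb [psi a + d]addrC; apply: leDl.
Qed.

Lemma dprime_inj a b : a != 0 -> b != 0 -> dprime psi a = dprime psi b -> a = b.
Proof.
move=> a0 b0 e; apply/eqP; apply/negPn/negP => hne.
have d0 : a - b != 0 by rewrite subr_eq0.
case: hG => refl _ _ tot _.
case/orP: (tot 0 (a - b)) => h.
- by apply: (inj_half a0 b0 _ e); rewrite /ltg h eq_sym.
- apply: (inj_half b0 a0 _ (esym e)); rewrite /ltg.
  have := leD (b - a) h; rewrite add0r -opprB addNr => ->.
  by rewrite eq_sym subr_eq0 eq_sym.
Qed.

Lemma le_mulrn x n : le 0 x -> (1 <= n)%N -> le x (x *+ n).
Proof.
move=> hx; elim: n => // [[|n]] IH _; first by rewrite mulr1n; case: hG => r _ _ _ _.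
rewrite mulrSr; apply: le_trans' (IH isT) _.
by have := leDl (x *+ n.+1) hx; rewrite addr0.
Qed.
End H.

Theorem lemma3p10 (G : zmodType) (le : rel G) (psi : G -> G)
  (hG : ordered_abelian_group le)
  (hAC : asymptotic_couple le psi)
  (hH : H_asymptotic le psi)
  (hAI : has_asymptotic_integration psi)
  (alpha : G) (halpha : in_neg_prime le psi alpha)
  (n : nat) (hn : (1 <= n)%N) :
  in_pos_prime le psi (alpha + (succ_fun psi alpha - alpha) *+ n.+1).
Proof.
case: halpha => g [hg <-].
have g0 : g != 0 by case/andP: hg.
have hint : aint psi (dprime psi g) = g.
  rewrite /aint; case: (epsilon_spec (inhabits (0 : G))
     (fun h : G => h != 0 /\ dprime psi h = dprime psi g) (ex_intro _ g (conj g0 erefl))).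
  by move=> h0 he; apply: (dprime_inj hG hAC).
rewrite /succ_fun hint.
have pos : ltg le 0 (- g).
  case/andP: hg => h1 h2; rewrite /ltg.
  have := leD hG (- g) h1; rewrite subrr add0r => ->.
  by rewrite eq_sym oppr_eq0.
have ple : le (- g) ((- g) *+ n) by apply: le_mulrn => //; case/andP: pos.
exists ((- g) *+ n); split.
- case/andP: pos => h1 h2; rewrite /ltg.
  case: hG => _ anti tr _ _.
  rewrite (tr _ _ _ h1 ple) /=; apply/negP => /eqP e.
  rewrite -e in ple.
  by move: h2; rewrite (anti 0 (- g)) ?eqxx // h1 ple.
- have k0 : (- (n%:Z)) != 0 by by rewrite oppr_eq0 eqz_nat -lt0n.
  case: hAC => _ h2 _.
  have := h2 g (- (n%:Z)) g0 k0; rewrite mulrNz -pmulrn -mulNrn => hp.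
  rewrite /dprime hp.
  exact: (aux2 g (psi g) n).
Qed.
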